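(* Let $a,b$ be distinct real numbers and $x_0\in\mathbb{R}$. Let $\mu_n:=2-1/2^{n+1}$ for $n\in\mathbb{N}$. Define the sequence $(\lambda_n)_{n\in\mathbb{N}}$ as the concatenation of the finite blocks $B_0,B_1,B_2,\dots$, where $B_m:=(\mu_0,\mu_1,\dots,\mu_{2m},1)$ (of length $2m+2$); i.e. \[ (\lambda_n)_{n\in\mathbb{N}}=(\mu_0,1,\mu_0,\mu_1,\mu_2,1,\mu_0,\mu_1,\mu_2,\mu_3,\mu_4,1,\dots). \] Define $(x_n)_{n\in\mathbb{N}}$ by \[ x_{2n+1}:=(1-\lambda_{2n})x_{2n}+\lambda_{2n}a,\qquad x_{2n+2}:=(1-\lambda_{2n+1})x_{2n+1}+\lambda_{2n+1}b . \] Then $x_{n(n+1)}=b$ for every $n\ge1$, $|x_{n(n+1)-1}|\to+\infty$, and hence $(x_n)_{n\in\mathbb{N}}$ is unbounded with $\liminf_n|x_n|<+\infty=\limsup_n|x_n|$. *)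

(* Defs.v *)
From HB Require Import structures.
From mathcomp Require Import all_boot all_order all_algebra.
From mathcomp Require Import all_classical all_reals all_analysis.
Set Implicit Arguments. Unset Strict Implicit. Unset Printing Implicit Defensive.
Import Order.TTheory GRing.Theory Num.Theory.
Local Open Scope ring_scope.

Definition mu {R : realType} (n : nat) : R := 2 - (2 ^+ n.+1)^-1.

Definition block {R : realType} (m : nat) : seq R :=
  rcons (mkseq (@mu R) (2 * m).+1) 1.

(* lambda = concatenation B_0 ++ B_1 ++ ... ; the first n+1 blocks already
   have length >= n+1, so the n-th entry is read off their concatenation. *)
Definition lam {R : realType} (n : nat) : R :=
  nth 0 (flatten (map (@block R) (iota 0 n.+1))) n.

Fixpoint xseq {R : realType} (a b x0 : R) (n : nat) : R :=
  match n with
  | 0 => x0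
  | k.+1 => (1 - lam k) * xseq a b x0 k + lam k * (if odd k then b else a)
  end.

(* Main.v *)
Require Import Defs.
From HB Require Import structures.
From mathcomp Require Import all_boot all_order all_algebra.
From mathcomp Require Import all_classical all_reals all_analysis.
From mathcomp Require Import zify ring lra.
Import Order.TTheory GRing.Theory Num.Theory.
Local Open Scope classical_set_scope.
Local Open Scope ring_scope.

Lemma size_fb (R : realType) m :
  size (flatten (map (@block R) (iota 0 m))) = (m * m.+1)%N.
Proof.
elim: m => // m IH.
rewrite -addn1 iotaD map_cat flatten_cat size_cat IH /= cats0 size_rcons size_map size_iota.
lia.
Qed.

Lemma lam_block (R : realType) m j : (j <= (2 * m).+1)%N ->
  @lam R (m * m.+1 + j) = nth 0 (block m) j.
Proof.
move=> hj; rewrite /lam.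
have hm : (m <= (m * m.+1 + j).+1)%N by nia.
rewrite -(subnKC hm) iotaD map_cat flatten_cat nth_cat size_fb.
rewrite ltnNge leq_addr /= addKn.
have -> : ((m * m.+1 + j).+1 - m = (m * m.+1 + j - m).+1)%N by lia.
have -> : forall k, iota (0+m) k.+1 = (0+m) :: iota (0+m).+1 k by [].
rewrite map_cons -cat1s flatten_cat (_ : flatten [:: block (0+m)] = block m); last by rewrite /= cats0.
rewrite nth_cat size_rcons size_mkseq ltnS hj.
by [].
Qed.

Lemma nth_block (R : realType) m j : (j <= (2 * m).+1)%N ->
  nth 0 (@block R m) j = if j == (2 * m).+1 then 1 else mu j.
Proof.
move=> hj; rewrite /block nth_rcons size_mkseq.
case: ltnP => h.
  by rewrite nth_mkseq // ifN // neq_ltn h.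
have -> : j = (2 * m).+1 by apply/eqP; rewrite eqn_leq hj.
by rewrite eqxx.
Qed.

Lemma odd_mm m j : odd (m * m.+1 + j) = odd j.
Proof. by rewrite oddD oddM /= andbN. Qed.

Lemma xb (R : realType) (a b x0 : R) m : xseq a b x0 (m.+1 * m.+2) = b.
Proof.
have -> : (m.+1 * m.+2 = (m * m.+1 + (2 * m).+1).+1)%N by nia.
rewrite /= lam_block // nth_block // eqxx odd_mm /= oddM /=.
by rewrite subrr mul0r add0r mul1r.
Qed.
Lemma xS (R : realType) (a b x0 : R) n :
  xseq a b x0 n.+1 = (1 - lam n) * xseq a b x0 n + lam n * (if odd n then b else a).
Proof. by []. Qed.

Fixpoint V (R : realType) (k : nat) : R := match k with
  | 0 => 1
  | k.+1 => (1 - mu (2*k)) * (1 - mu (2*k).+1) * V R k + mu (2*k).+1 end.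

Lemma VS (R : realType) k : V R k.+1 = (1 - mu (2*k)) * (1 - mu (2*k).+1) * V R k + mu (2*k).+1.
Proof. by []. Qed.

Lemma blockx (R : realType) (a b x0 : R) m k : (1 <= m)%N -> (k <= m)%N ->
  xseq a b x0 (m * m.+1 + 2 * k) - a = (b - a) * V R k.
Proof.
case: m => // m _; elim: k => [|k IH] hk.
  by rewrite muln0 addn0 xb /= mulr1.
have -> : (m.+1 * m.+2 + 2 * k.+1 = (m.+1 * m.+2 + 2 * k).+2)%N by lia.
set N := (m.+1 * m.+2 + 2 * k)%N.
rewrite (xS _ a b x0 N.+1) (xS _ a b x0 N) /N -addnS !lam_block; try lia.
rewrite !nth_block; try lia.
have -> : (2 * k == (2 * m.+1).+1) = false by lia.
have -> : ((2 * k).+1 == (2 * m.+1).+1) = false by lia.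
rewrite !odd_mm (_ : odd (2 * k) = false); last by rewrite oddM.
rewrite (_ : odd (2 * k).+1 = true); last by rewrite oddS oddM.
have := IH ltac:(lia).
set X := xseq _ _ _ _ => HX.
rewrite (_ : X = (b - a) * V R k + a); last by rewrite -HX; ring.
rewrite VS; ring.
Qed.
Definition tk (R : realType) (k : nat) : R := (2 ^+ (2 * k).+1)^-1.

Lemma mu_even (R : realType) k : mu (2 * k) = 2 - tk R k.
Proof. by []. Qed.

Lemma mu_odd (R : realType) k : mu (2 * k).+1 = 2 - tk R k / 2.
Proof. by rewrite /mu /tk exprS invfM mulrC. Qed.

Lemma pow_ge (R : realType) k : 3 * (2 * (k%:R : R) + 1) <= 2 * 2 ^+ (2 * k).+1.
Proof.
elim: k => [|k IH]; first by rewrite mulr0 add0r expr1; lra.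
rewrite -natr1 mulnS add2n !exprS.
have : 1 <= 2 ^+ (2 * k) :> R by rewrite exprn_ege1 //; lra.
rewrite exprS in IH. nra.
Qed.

Lemma tk_facts (R : realType) k :
  0 < tk R k /\ tk R k <= 1/2 /\ (2 * k%:R + 1) * tk R k * 3 <= 2.
Proof.
set P : R := 2 ^+ (2 * k).+1.
have h1 : 1 <= 2 ^+ (2 * k) :> R by rewrite exprn_ege1 //; lra.
have hP : 2 <= P by rewrite /P exprS; nra.
have hP0 : P != 0 by apply/eqP => h; rewrite h in hP; lra.
have htP : tk R k * P = 1 by rewrite /tk -/P mulVf.
have ht : 0 < tk R k by rewrite /tk invr_gt0 -/P; lra.
have := pow_ge R k; rewrite -/P => hk.
split => //; split; nra.
Qed.

Lemma V_bounds (R : realType) k : 1 + (k%:R : R) / 2 <= V R k <= 2 * k%:R + 1.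
Proof.
elim: k => [|k IH]; first by rewrite /= mulr0 mul0r addr0 add0r lexx.
rewrite VS mu_even mu_odd -natr1.
have [ht [ht2 hk]] := tk_facts R k.
move: IH => /andP [l u].
set t := tk R k in ht ht2 hk *; set v := V R k in l u *.
apply/andP; split; nra.
Qed.
Lemma idx_bound (R : realType) (a b x0 : R) m : (1 <= m)%N ->
  `|b - a| * (1 + (m%:R : R) / 2) / 2 - `|a| <= `|xseq a b x0 (m.+1 * m.+2).-1|.
Proof.
move=> hm.
have -> : ((m.+1 * m.+2).-1 = (m * m.+1 + 2 * m).+1)%N by nia.
rewrite xS lam_block; last lia.
rewrite nth_block; last lia.
have -> : (2 * m == (2 * m).+1) = false by lia.
rewrite odd_mm (_ : odd (2 * m) = false); last by rewrite oddM.
have := blockx _ a b x0 m m hm (leqnn m).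
set X := xseq _ _ _ _ => HX.
have [ht [ht2 _]] := tk_facts R m.
have /andP [vl vu] := V_bounds R m.
rewrite mu_even.
have -> : (1 - (2 - tk R m)) * X + (2 - tk R m) * a =
  a + (tk R m - 1) * ((b - a) * V R m).
  by rewrite -HX; ring.
have h : `|(tk R m - 1) * ((b - a) * V R m)| <= `|a + (tk R m - 1) * ((b - a) * V R m)| + `|a|.
  have := ler_normB (a + (tk R m - 1) * ((b - a) * V R m)) a.
  by rewrite addrC addKr.
rewrite !normrM distrC (ger0_norm (x := 1 - tk R m)) in h; last lra.
rewrite (ger0_norm (x := V R m)) in h; last lra.
have hn : 0 <= `|b - a| by [].
have h2 : `|b - a| * (1 + (m%:R : R) / 2) <= `|b - a| * V R m by rewrite ler_wpM2l.
move: h h2.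
set w := `|b - a| * V R m; set z := `|b - a| * _.
move=> h h2.
have hw : 0 <= w by rewrite /w mulr_ge0 //; lra.
nra.
Qed.

Lemma key (R : realType) (a b x0 : R) (hab : a != b) (M : R) :
  exists N, (1 <= N)%N /\ forall m, (N <= m)%N -> M < `|xseq a b x0 (m.+1 * m.+2).-1|.
Proof.
set c := `|b - a|.
have hc : 0 < c by rewrite normr_gt0 subr_eq0 eq_sym.
set y := 4 * (`|M| + `|a|) / c.
have hy : 0 <= y.
  rewrite /y; apply: divr_ge0; last lra.
  by apply: mulr_ge0 => //; apply: addr_ge0.
have hyc : y * c = 4 * (`|M| + `|a|) by rewrite /y mulfVK // gt_eqF.
exists (Num.bound y).+1; split => // m hm.
have hm1 : (1 <= m)%N by lia.
have := idx_bound _ a b x0 m hm1.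
have hb := archi_boundP hy.
have : ((Num.bound y).+1%:R : R) <= m%:R by rewrite ler_nat.
rewrite -natr1 => hmr.
have hMa : M <= `|M| by exact: ler_norm.
have hA : 0 <= `|a| by [].
have hcy : c * y < c * m%:R by rewrite ltr_pM2l //; lra.
rewrite mulrC in hyc; rewrite -/c; clearbody c y.
nra.
Qed.
Theorem mainTheorem7 (R : realType) (a b x0 : R) (hab : a != b) :
  (forall n : nat, (1 <= n)%N -> xseq a b x0 (n * n.+1) = b) /\
  ((fun n : nat => `|xseq a b x0 (n * n.+1).-1|) @ \oo --> +oo) /\
  ~ (exists M : R, forall n : nat, `|xseq a b x0 n| <= M) /\
  (limn_einf (fun n : nat => (`|xseq a b x0 n|)%:E) < +oo)%E /\
  limn_esup (fun n : nat => (`|xseq a b x0 n|)%:E) = +oo%E.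
Proof.
split; first by case=> // m _; rewrite xb.
split.
  apply/cvgryPgt => A.
  have [N [hN1 hN]] := key _ _ _ x0 hab A.
  exists N.+1 => // n /= hn.
  case: n hn => // m hm; apply: hN; lia.
split.
  move=> [M hM].
  have [N [hN1 hN]] := key _ _ _ x0 hab M.
  have := hN N (leqnn N); have := hM (N.+1 * N.+2).-1; lra.
split.
  rewrite limn_einf_lim.
  apply: (@le_lt_trans _ _ (`|b|%:E)); last exact: ltry.
  apply: lime_le; first exact: is_cvg_einfs.
  apply: nearW => n /=.
  apply: ereal_inf_lbound; exists (n.+1 * n.+2)%N; first by rewrite /=; nia.
  by rewrite xb.
rewrite limn_esup_lim.
apply/eqP; rewrite eq_le leey /=.
apply: lime_ge; first exact: is_cvg_esups.
apply: nearW => n /=.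
rewrite /esups /=.
set S := sdrop _ _.
have ub := @ereal_sup_ubound _ S.
case E : (ereal_sup S) => [r| |] //.
- have [N [hN1 hN]] := key _ _ _ x0 hab r.
  have := hN (maxn n N) (leq_maxr _ _).
  set k := ((maxn n N).+1 * (maxn n N).+2).-1.
  have : ((`|xseq a b x0 k|)%:E <= r%:E)%E.
    rewrite -E; apply: ub; exists k => //=; rewrite /k; nia.
  move=> h1 h2; move: h1; rewrite lee_fin => h1; by have := lt_le_trans h2 h1; rewrite ltxx.
- have : ((`|xseq a b x0 n|)%:E <= -oo)%E by rewrite -E; apply: ub; exists n => /=.
  by rewrite leeNy_eq.
Qed.
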